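(* The poset $(\mathcal{F}_{\mathrm{ord}}(n),\le)$ is isomorphic to the Tamari lattice $\mathrm{Tam}_n$.
   Context: An ordered forest is a finite forest of rooted trees in which the children of each vertex are linearly ordered and the trees are linearly ordered (left to right); $\mathcal{F}_{\mathrm{ord}}(n)$ is the set of ordered forests on $n$ vertices up to isomorphism. Operation on a vertex $v$: if $v$ is a leaf nothing changes; otherwise the rightmost child $v'$ of $v$ (with its subtree) is detached from $v$ and either attached to the parent $w$ of $v$ immediately to the right of $v$, or, if $v$ is a root, made a new tree immediately to the right of the tree of $v$. $F'\lessdot F$ means $F'$ is obtained from $F$ by operating on a non-leaf vertex, and $\le$ is the reflexive-transitive closure of $\lessdot$. $\mathrm{Tam}_n$ is (isomorphic to) the set $\mathrm{Av}_n(312)$ of permutations with no $i_1<i_2<i_3$ and $\sigma(i_1)>\sigma(i_3)>\sigma(i_2)$, ordered as a subposet of $S_n$ under the right weak order (generated by $\sigma\circ(i\ i{+}1)\lessdot\sigma$ whenever $\sigma(i)>\sigma(i+1)$). *)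

(* Defs.v *)
From Stdlib Require Import Relations.Relation_Operators.
From mathcomp Require Import all_boot all_fingroup.
Set Implicit Arguments. Unset Strict Implicit. Unset Printing Implicit Defensive.

(* Ordered (plane) trees and forests, up to isomorphism: an isomorphism class
   of ordered rooted trees is exactly a term [Node cs] where [cs] is the
   left-to-right list of the subtrees rooted at the children of the root. *)
Inductive tree : Type := Node of seq tree.
Definition forest := seq tree.

Fixpoint tree_size (t : tree) : nat :=
  let: Node cs := t in (sumn (map tree_size cs)).+1.
Definition forest_size (F : forest) : nat := sumn (map tree_size F).

(* [forest_step F F'] : F' is obtained from F by operating on a non-leaf vertex v.
   Either v is one of the roots of F (its rightmost child c becomes a new tree
   immediately to the right of v's tree), or v lies inside a tree [Node cs] of F,
   in which case the operation happens inside the forest [cs] of subtrees of that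
   root (when v is a child of this root, c is attached to the root immediately to
   the right of v, i.e. it becomes a new tree of the forest [cs] right of v). *)
Inductive forest_step : forest -> forest -> Prop :=
  | step_root (a b cs : forest) (c : tree) :
      forest_step (a ++ Node (rcons cs c) :: b) (a ++ Node cs :: c :: b)
  | step_inner (a b cs cs' : forest) :
      forest_step cs cs' ->
      forest_step (a ++ Node cs :: b) (a ++ Node cs' :: b).

Definition forest_le (F' F : forest) : Prop := @clos_refl_trans forest forest_step F F'.

Definition Ford (n : nat) := {F : forest | forest_size F = n}.

Definition avoids312 n (s : 'S_n) : Prop :=
  ~ exists i1 i2 i3 : 'I_n,
      [/\ i1 < i2, i2 < i3, s i1 > s i3 & s i3 > s i2].

Definition weak_cover n (sigma tau : 'S_n) : Prop :=
  exists i j : 'I_n, [/\ val j = (val i).+1, sigma i > sigma j &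
                        forall x, tau x = sigma (tperm i j x)].

Definition weak_le n (tau sigma : 'S_n) : Prop :=
  @clos_refl_trans 'S_n (@weak_cover n) sigma tau.

Definition Tam (n : nat) := {s : 'S_n | avoids312 s}.

(* Main.v *)
Require Import Defs.
From mathcomp Require Import all_boot all_fingroup.
From mathcomp Require Import zify.
From Stdlib Require Import Classical_Prop Relations.Relation_Operators ClassicalEpsilon ProofIrrelevance.
Set Implicit Arguments. Unset Strict Implicit. Unset Printing Implicit Defensive.

Notation fs := forest_size.

Lemma fs_cons cs rest : fs (Node cs :: rest) = (fs cs).+1 + fs rest.
Proof. by []. Qed.

Lemma fs_cat a b : fs (a ++ b) = fs a + fs b.
Proof. by rewrite /forest_size map_cat sumn_cat. Qed.

Lemma forest_ind2 (P : forest -> Prop) (H0 : P [::])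
  (H1 : forall cs rest, P cs -> P rest -> P (Node cs :: rest)) (F : forest) : P F.
Proof.
move: {2}(fs F) (leqnn (fs F)) => m; elim: m F => [|m IH] [|[cs] rest] //=.
rewrite fs_cons => Hm; apply: H1; apply: IH; lia.
Qed.

Fixpoint Dt (t : tree) (Dr : nat -> nat -> bool) (a b : nat) {struct t} : bool :=
  let: Node cs := t in
  let Dcs := (fix Df (F : forest) : nat -> nat -> bool :=
               match F with [::] => fun _ _ => false | c :: F' => Dt c (Df F') end) cs in
  if a == 0 then (0 < b) && (b <= fs cs)
  else if a <= fs cs then (b <= fs cs) && Dcs a.-1 b.-1
  else (fs cs < b) && Dr (a - (fs cs).+1) (b - (fs cs).+1).

Definition D (F : forest) : nat -> nat -> bool := foldr Dt (fun _ _ => false) F.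

Lemma D_nil a b : D [::] a b = false. Proof. by []. Qed.

Lemma D_cons cs rest a b : D (Node cs :: rest) a b =
      if a == 0 then (0 < b) && (b <= fs cs)
      else if a <= fs cs then (b <= fs cs) && D cs a.-1 b.-1
      else (fs cs < b) && D rest (a - (fs cs).+1) (b - (fs cs).+1).
Proof.
rewrite /= -/(D rest).
suff -> : (fix Df (F : forest) : nat -> nat -> bool :=
               match F with [::] => fun _ _ => false | c :: F' => Dt c (Df F') end) cs = D cs by [].
by elim: cs => //= c cs ->.
Qed.

Fixpoint cntt (t : tree) : nat :=
  let: Node cs := t in
  fs cs + (fix cf (F : forest) : nat := match F with [::] => 0 | c :: F' => cntt c + cf F' end) cs.
Definition cnt (F : forest) : nat := sumn (map cntt F).

Lemma cnt_cons cs rest : cnt (Node cs :: rest) = fs cs + cnt cs + cnt rest.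
Proof.
rewrite /cnt /=; congr (_ + _ + _).
by elim: cs => //= c cs ->.
Qed.

Lemma cnt_cat a b : cnt (a ++ b) = cnt a + cnt b.
Proof. by rewrite /cnt map_cat sumn_cat. Qed.

Lemma D0 F a b : D F a b -> a < b < fs F.
Proof.
elim/forest_ind2: F a b => [//|cs rest IHc IHr] a b.
rewrite D_cons fs_cons.
case: ifP => [/eqP-> /andP[]|a0]; first lia.
case: ifP => ak.
  move=> /andP[bk /IHc]; lia.
move=> /andP[kb /IHr]; lia.
Qed.

Lemma DT F a b c : D F a b -> D F b c -> D F a c.
Proof.
elim/forest_ind2: F a b c => [//|cs rest IHc IHr] a b c.
move=> Hab Hbc; have H1 := D0 Hab; have H2 := D0 Hbc; move: H1 H2 Hab Hbc; rewrite !D_cons fs_cons => H1 H2.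
case: ifP => [/eqP a0|a0].
  case: ifP => [/eqP b0|b0]; first lia.
  case: ifP => bk; first by move=> /andP[? ?] /andP[? ?]; apply/andP; lia.
  move=> /andP[]; lia.
case: ifP => ak.
  case: ifP => [/eqP b0|b0]; first lia.
  case: ifP => bk; last by move=> /andP[]; lia.
  move=> /andP[? E1] /andP[? E2]; rewrite (IHc _ _ _ E1 E2); apply/andP; split=>//.
case: ifP => [/eqP b0|b0]; first lia.
case: ifP => bk; first lia.
move=> /andP[? E1] /andP[? E2]; rewrite (IHr _ _ _ E1 E2); apply/andP; split=>//; lia.
Qed.

Lemma DIC F a b c : a < b -> b < c -> D F a c -> D F a b.
Proof.
elim/forest_ind2: F a b c => [//|cs rest IHc IHr] a b c ab bc.
rewrite !D_cons.
case: ifP => [/eqP a0|a0]; first by move=> /andP[? ?]; apply/andP; lia.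
case: ifP => ak.
  by move=> /andP[ck E]; rewrite (IHc _ _ (c.-1)) //; lia.
by move=> /andP[kc E]; rewrite (IHr _ _ (c - (fs cs).+1)) //; lia.
Qed.

Lemma D_catL a F x y : x < fs a -> D (a ++ F) x y = D a x y.
Proof.
elim: a x y => [|[cs] a IH] x y //.
rewrite cat_cons !D_cons fs_cons => Hx.
case: ifP => // x0; case: ifP => // xk.
rewrite IH //; lia.
Qed.

Lemma D_catR a F x y : D (a ++ F) (x + fs a) (y + fs a) = D F x y.
Proof.
elim: a x y => [|[cs] a IH] x y; first by rewrite /= !addn0.
rewrite cat_cons D_cons fs_cons.
case: ifP => [/eqP|_]; first lia.
case: ifP => [|_]; first lia.
have -> : x + ((fs cs).+1 + fs a) - (fs cs).+1 = x + fs a by lia.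
have -> : y + ((fs cs).+1 + fs a) - (fs cs).+1 = y + fs a by lia.
rewrite IH; have -> : fs cs < y + ((fs cs).+1 + fs a) by lia.
by [].
Qed.

Lemma D_catGE a F x y : fs a <= x ->
  D (a ++ F) x y = (fs a <= y) && D F (x - fs a) (y - fs a).
Proof.
move=> ax; case: (leqP (fs a) y) => ay /=.
  by rewrite -(D_catR a F) !subnK.
by apply/negbTE/negP => /D0; lia.
Qed.

Lemma fs_rcons cs c : fs (rcons cs c) = fs cs + tree_size c.
Proof. by rewrite -cats1 fs_cat /forest_size /= addn0. Qed.

Lemma D_root_step cs c b x y :
  D (Node cs :: c :: b) x y = D (Node (rcons cs c) :: b) x y && ~~ ((x == 0) && (fs cs < y)).
Proof.
rewrite !D_cons fs_rcons.
set k := fs cs; set m := tree_size c.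
have m0 : 0 < m by rewrite /m; case: (c).
case: (x =P 0) => [_|/eqP x0] /=; first by apply/idP/idP; lia.
rewrite ?andbT.
case: ifP => xk.
  rewrite ifT; last by lia.
  rewrite -cats1 D_catL; last by lia.
  case E: (D cs _ _); last by rewrite !andbF.
  move: (D0 E); rewrite -/k => ?; rewrite !andbT; lia.
change (Dt c (D b)) with (D ([:: c] ++ b)).
case: (leqP x (k + m)) => xkm.
  rewrite D_catL; last by rewrite /forest_size /= addn0 -/m; lia.
  rewrite -cats1 D_catGE -/k; last by lia.
  have -> : x.-1 - k = x - k.+1 by lia.
  have -> : y.-1 - k = y - k.+1 by lia.
  case E: (D _ _ _); last by rewrite !andbF.
  move: (D0 E); rewrite /forest_size /= addn0 -/m => ?; rewrite !andbT; lia.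
rewrite D_catGE; last by rewrite /forest_size /= addn0 -/m; lia.
rewrite /forest_size /= addn0 -/m -/(fs b).
have -> : x - k.+1 - m = x - (k + m).+1 by lia.
have -> : y - k.+1 - m = y - (k + m).+1 by lia.
case: (D b _ _); last by rewrite !andbF.
rewrite !andbT; apply/idP/idP; lia.
Qed.

Definition Pstep (F F' : forest) :=
  [/\ fs F' = fs F, (forall x y, D F' x y -> D F x y) & cnt F' < cnt F].

Lemma Pstep_cons t F F' : Pstep F F' -> Pstep (t :: F) (t :: F').
Proof.
case: t => cs [H1 H2 H3]; split.
- by rewrite !fs_cons H1.
- move=> x y; rewrite !D_cons.
  case: ifP => // _; case: ifP => // _ /andP[-> /H2] //.
- by rewrite !cnt_cons; lia.
Qed.

Lemma Pstep_cat a F F' : Pstep F F' -> Pstep (a ++ F) (a ++ F').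
Proof. by elim: a => // t a IH /IH /(Pstep_cons t). Qed.

Lemma Pstep_root cs c b : Pstep (Node (rcons cs c) :: b) (Node cs :: c :: b).
Proof.
split.
- by rewrite !fs_cons fs_rcons /forest_size /=; lia.
- by move=> x y; rewrite D_root_step => /andP[].
- rewrite !cnt_cons -cats1 cnt_cat fs_cat.
  case: c => ccs; rewrite (cnt_cons ccs [::]) cnt_cons /forest_size /=; lia.
Qed.

Lemma Pstep_inner cs cs' b : Pstep cs cs' -> Pstep (Node cs :: b) (Node cs' :: b).
Proof.
case=> H1 H2 H3; split.
- by rewrite !fs_cons H1.
- move=> x y; rewrite !D_cons H1.
  case: ifP => // _; case: ifP => // _ /andP[-> /H2] //.
- by rewrite !cnt_cons H1; lia.
Qed.

Lemma step_P F F' : forest_step F F' -> Pstep F F'.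
Proof.
elim=> [a b cs c|a b cs cs' _ IH]; apply: Pstep_cat.
  exact: Pstep_root.
exact: Pstep_inner.
Qed.

Lemma tree_size_gt0 c : 0 < tree_size c.
Proof. by case: c. Qed.

Lemma D_cons0 cs rest y : D (Node cs :: rest) 0 y = (0 < y) && (y <= fs cs).
Proof. by rewrite D_cons. Qed.

Lemma D_consL cs rest x y : 0 < x <= fs cs ->
  D (Node cs :: rest) x y = (y <= fs cs) && D cs x.-1 y.-1.
Proof. by move=> H; rewrite D_cons ifF ?ifT //; lia. Qed.

Lemma D_consL' cs rest x y : x < fs cs ->
  D (Node cs :: rest) x.+1 y.+1 = D cs x y.
Proof.
move=> H; rewrite D_consL /=; last by lia.
case E: (D cs x y); rewrite ?andbF ?andbT //; move/D0: E; lia.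
Qed.

Lemma D_consR cs rest x y : fs cs < x ->
  D (Node cs :: rest) x y = (fs cs < y) && D rest (x - (fs cs).+1) (y - (fs cs).+1).
Proof. by move=> H; rewrite D_cons ifF ?ifF //; lia. Qed.

Lemma D_consR' cs rest x y :
  D (Node cs :: rest) (x + (fs cs).+1) (y + (fs cs).+1) = D rest x y.
Proof.
rewrite D_consR; last by lia.
rewrite !addnK; have -> : fs cs < y + (fs cs).+1 by lia. by [].
Qed.

Lemma step_cons t F F' : forest_step F F' -> forest_step (t :: F) (t :: F').
Proof.
case=> [a b cs c|a b cs cs' H].
  exact: (step_root (t :: a) b cs c).
exact: (step_inner (t :: a) b H).
Qed.

Lemma stepB F (R : nat -> nat -> bool) :
  (forall a b, R a b -> D F a b) ->
  (forall a b c, R a b -> R b c -> R a c) ->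
  (forall a b c, a < b -> b < c -> R a c -> R a b) ->
  (exists a b, D F a b && ~~ R a b) ->
  exists F', forest_step F F' /\ forall a b, R a b -> D F' a b.
Proof.
elim/forest_ind2: F R => [|cs rest IHc IHr] R HRD HT HIC [a0 [b0 Hm]].
  by rewrite D_nil in Hm.
set F := Node cs :: rest in HRD Hm *.
have Hmain : (exists a b, [/\ D F a b, ~~ R a b & 0 < a]) ->
    exists F', forest_step F F' /\ forall a b, R a b -> D F' a b.
  move=> [a [b [Hd Hr a1]]].
  have /andP[ab bF] := D0 Hd.
  case: (leqP a (fs cs)) => ak.
  + pose Rc x y := (x < fs cs) && R x.+1 y.+1.
    have [cs' [Hst HR']] : exists cs', forest_step cs cs' /\ forall x y, Rc x y -> D cs' x y.
      apply: IHc.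
      - by move=> x y /andP[xk /HRD]; rewrite /F D_consL'.
      - move=> x y z /andP[? H1] /andP[? H2]; apply/andP; split=> //; exact: HT H1 H2.
      - move=> x y z xy yz /andP[? Hxz]; apply/andP; split; first by lia.
        by apply: (HIC _ _ _ _ _ Hxz); lia.
      - exists a.-1, b.-1; have Ea : a = a.-1.+1 by lia.
        have Eb : b = b.-1.+1 by lia.
        move: Hd Hr; rewrite Ea Eb /F D_consL'; last by lia.
        by move=> -> Hr; rewrite /Rc /= -Ea -Eb; rewrite -Ea -Eb in Hr; rewrite (negbTE Hr) andbF.
    have [fsE _ _] := step_P Hst.
    exists (Node cs' :: rest); split; first exact: (step_inner [::] rest Hst).
    move=> x y Rxy; have := HRD _ _ Rxy; have /andP[xy _] := D0 (HRD _ _ Rxy).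
    rewrite /F !D_cons fsE.
    case: ifP => // x0; case: ifP => // xk /andP[yk _]; rewrite yk /=.
    apply: HR'; rewrite /Rc; apply/andP; split; first by lia.
    have -> : x.-1.+1 = x by lia.
    by have -> : y.-1.+1 = y by lia.
  + pose Rr x y := R (x + (fs cs).+1) (y + (fs cs).+1).
    have [rest' [Hst HR']] : exists rest', forest_step rest rest' /\ forall x y, Rr x y -> D rest' x y.
      apply: IHr.
      - by move=> x y /HRD; rewrite /F D_consR'.
      - by move=> x y z; apply: HT.
      - move=> x y z xy yz; apply: HIC; lia.
      - exists (a - (fs cs).+1), (b - (fs cs).+1).
        move: Hd Hr; rewrite /Rr !subnK; try lia.
        by rewrite /F D_consR //= => /andP[_ ->].
    exists (Node cs :: rest'); split; first exact: step_cons.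
    move=> x y Rxy; have := HRD _ _ Rxy; have /andP[xy _] := D0 (HRD _ _ Rxy).
    rewrite /F !D_cons.
    case: ifP => // x0; case: ifP => // xk /andP[ky _]; rewrite ky /=.
    by apply: HR'; rewrite /Rr !subnK //; lia.
have [[cs0 [c Ecs]] | Hnil] : (exists cs0 c, cs = rcons cs0 c) \/ cs = [::].
  by case/lastP: cs {IHc F HRD Hm Hmain} => [|cs0 c]; [right | left; exists cs0, c].
- case: (boolP (R 0 (fs cs0).+1)) => Rl; last first.
    exists (Node cs0 :: c :: rest); split.
      by rewrite /F Ecs; exact: (step_root [::] rest cs0 c).
    move=> x y Rxy; rewrite D_root_step -Ecs (HRD _ _ Rxy) /=.
    apply/negP => /andP[/eqP x0 lty]; subst x.
    case: (ltngtP y (fs cs0).+1) => [|yl|yl]; first lia.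
      by move: Rl; rewrite (HIC 0 (fs cs0).+1 y) //; lia.
    by move: Rl; rewrite -yl Rxy.
  have [a [b [Hd Hr a1]]] : exists a b, [/\ D F a b, ~~ R a b & 0 < a].
    move: Hm => /andP[Hd Hr]; case: (posnP a0) => [a00|]; last by exists a0, b0.
    subst a0; move: (Hd); rewrite D_cons0 Ecs fs_rcons => /andP[b00 b0k].
    case: (ltngtP b0 (fs cs0).+1) => [b0l|b0l|b0l].
    + by move: Hr; rewrite (HIC 0 b0 (fs cs0).+1) //; lia.
    + exists (fs cs0).+1, b0; split=> //.
      * have Eb : b0 = b0.-1.+1 by lia.
        rewrite /F Eb D_consL' Ecs; last by rewrite fs_rcons; have := tree_size_gt0 c; lia.
        rewrite -cats1 D_catGE; last by lia.
        case: (c) b0k => ccs; rewrite /tree_size -/tree_size => b0k.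
        rewrite subnn D_cons0; move: b0k b0l; rewrite /forest_size /=; lia.
      * by apply/negP => Rlb; move: Hr; rewrite (HT _ _ _ Rl Rlb).
    + by move: Hr; rewrite b0l Rl.
  by apply: Hmain; exists a, b.
apply: Hmain; exists a0, b0; move: Hm => /andP[Hd Hr]; split=> //.
move: (Hd); rewrite /F Hnil D_cons; case: ifP => [/eqP->|/eqP] /=; rewrite /forest_size /=; lia.
Qed.

Lemma Dinj F G : fs F = fs G -> (forall a b, D F a b = D G a b) -> F = G.
Proof.
elim/forest_ind2: F G => [|cs rest IHc IHr] [|[cs'] rest'] //.


move=> Hfs HD.
have Hk : fs cs = fs cs'.
  have := HD 0 (fs cs); have := HD 0 (fs cs'); rewrite !D_cons0.
  case: (ltngtP (fs cs) (fs cs')) => //; lia.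
have Hcs : cs = cs'.
  apply: IHc => // x y; case: (ltnP x (fs cs)) => xk.
    by rewrite -(D_consL' rest) // HD D_consL' // -Hk.
  by apply/idP/idP => /D0; lia.
have Hrest : rest = rest'.
  apply: IHr; first by move: Hfs; rewrite !fs_cons Hk; lia.
  by move=> x y; rewrite -(D_consR' cs) HD Hk D_consR'.
by rewrite Hcs Hrest.
Qed.

Lemma forest_le_D G F : forest_le G F <-> fs G = fs F /\ (forall a b, D G a b -> D F a b).
Proof.
split.
  rewrite /forest_le; elim=> [x y /step_P [? ? ?]|x|x y z _ [H1 H2] _ [H3 H4]] //.

  by split; [congruence | move=> a b /H4 /H2].
move: {2}(cnt F) (leqnn (cnt F)) => m.
elim: m F => [|m IH] F Hm [Hfs HGF].
- case: (Classical_Prop.classic (exists a b, D F a b && ~~ D G a b)) => [Hex|Hn].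
    have [F' [Hst _]] := stepB HGF (@DT G) (@DIC G) Hex.
    have [_ _] := step_P Hst; lia.
  have -> : F = G.
    apply: Dinj => // a b; apply/idP/idP; last exact: HGF.
    by move=> H; apply/negPn/negP => HnG; apply: Hn; exists a, b; rewrite H HnG.
  exact: rt_refl.
- case: (Classical_Prop.classic (exists a b, D F a b && ~~ D G a b)) => [Hex|Hn].
    have [F' [Hst HGF']] := stepB HGF (@DT G) (@DIC G) Hex.
    have [fsE _ cntlt] := step_P Hst.
    apply: (rt_trans _ _ _ F'); first exact: rt_step.
    apply: IH; first by lia.
    by split=> //; congruence.
  have -> : F = G.
    apply: Dinj => // a b; apply/idP/idP; last exact: HGF.
    by move=> H; apply/negPn/negP => HnG; apply: Hn; exists a, b; rewrite H HnG.
  exact: rt_refl.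
Qed.

Lemma build n (R : nat -> nat -> bool) :
  (forall a b, R a b -> a < b < n) ->
  (forall a b c, R a b -> R b c -> R a c) ->
  (forall a b c, a < b -> b < c -> R a c -> R a b) ->
  exists F, fs F = n /\ forall a b, D F a b = R a b.
Proof.
move: {2}n (leqnn n) => N; elim: N n R => [|N IH] n R HnN Hsup HT HIC.
  exists [::]; split; first by rewrite /forest_size /=; lia.
  by move=> a b; apply/esym/negP => /Hsup; lia.
case: (posnP n) => [n0|n0].
  exists [::]; split; first by rewrite /forest_size /=; lia.
  by move=> a b; apply/esym/negP => /Hsup; lia.
have [k [kn Hk]] : exists k, k < n /\ forall b, R 0 b = (0 < b <= k).
  case: (Classical_Prop.classic (exists b, R 0 b)) => [Hex|Hn].
    have ub : forall b, R 0 b -> b <= n by move=> b /Hsup; lia.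
    case: (ex_maxnP Hex ub) => k Rk Hmax.
    exists k; split; first by have := Hsup _ _ Rk; lia.
    move=> b; apply/idP/idP.
      by move=> Rb; have := Hsup _ _ Rb; have := Hmax _ Rb; lia.
    move=> /andP[b0 bk]; case: (ltngtP b k) => [bk'|//|->//]; last by lia.
    exact: (HIC 0 b k).
  exists 0; split=> // b; case Rb: (R 0 b); [by exfalso; apply: Hn; exists b | by case: b {Rb}].
pose Rc x y := (y < k) && R x.+1 y.+1.
pose Rr x y := R (x + k.+1) (y + k.+1).
have [cs [fcs Dcs]] : exists cs, fs cs = k /\ forall a b, D cs a b = Rc a b.
  apply: (IH k); first by lia.
  - by move=> a b /andP[bk /Hsup]; lia.
  - by move=> a b c /andP[_ H1] /andP[ck H2]; rewrite /Rc ck (HT _ _ _ H1 H2).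
  - move=> a b c ab bc /andP[ck H]; rewrite /Rc (HIC _ _ _ _ _ H) ?andbT; lia.
have [rest [frest Drest]] : exists rest, fs rest = n - k.+1 /\ forall a b, D rest a b = Rr a b.
  apply: (IH (n - k.+1)); first by lia.
  - by move=> a b /Hsup; lia.
  - by move=> a b c; apply: HT.
  - move=> a b c ab bc; apply: HIC; lia.
exists (Node cs :: rest); split; first by rewrite fs_cons fcs frest; lia.
move=> a b; rewrite D_cons fcs.
case: ifP => [/eqP->|a0]; first by rewrite Hk.
case: ifP => ak.
  rewrite Dcs /Rc.
  case: (posnP b) => [->|b0].
    have -> : R a 0 = false by apply/negP => /Hsup; lia.
    have -> : a.-1.+1 = a by lia.
    have -> : R a 0.-1.+1 = false by apply/negP => /Hsup; lia.
    by rewrite !andbF.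
  have -> : a.-1.+1 = a by lia.
  have -> : b.-1.+1 = b by lia.
  case Rab: (R a b); rewrite ?andbF //.
  have : R 0 b by apply: (HT _ a); rewrite // Hk; lia.
  rewrite Hk => /andP[_ bk]; rewrite bk /=; apply/eqP; rewrite eqb_id; lia.
rewrite Drest /Rr.
case: (ltnP k b) => kb /=.
  rewrite !subnK //; lia.
by apply/esym/negP => /Hsup; lia.
Qed.

Definition inv n (s : 'S_n) (a b : 'I_n) : bool := (a < b) && ((s^-1)%g b < (s^-1)%g a).
Definition invset n (s : 'S_n) : {set 'I_n * 'I_n} := [set p | inv s p.1 p.2].

Lemma inv_pos n (s : 'S_n) x y : inv s (s x) (s y) = (s x < s y) && (y < x).
Proof. by rewrite /inv !permK. Qed.

Lemma incr_ge n (h : 'S_n) : (forall x y : 'I_n, x < y -> h x < h y) -> forall x : 'I_n, x <= h x.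
Proof.
move=> Hh.
suff H : forall m (x : 'I_n), (x : nat) = m -> m <= h x by move=> x; exact: H.
elim=> [|m IH] x Hx; first by [].
have mn : m < n by have := ltn_ord x; lia.
have := IH (Ordinal mn) erefl; have := Hh (Ordinal mn) x; rewrite /= Hx; lia.
Qed.

Lemma incr_id n (h : 'S_n) : (forall x y : 'I_n, x < y -> h x < h y) -> forall x : 'I_n, h x = x.
Proof.
move=> Hh.
have Hh' : forall x y : 'I_n, x < y -> (h^-1)%g x < (h^-1)%g y.
  move=> x y xy; case: (ltngtP ((h^-1)%g x) ((h^-1)%g y)) => // H.
    by have := Hh _ _ H; rewrite !permKV; lia.
  by move/val_inj/perm_inj: H => H; move: xy; rewrite H; lia.
move=> x; have H1 := incr_ge Hh' x; have H2 := incr_ge Hh ((h^-1)%g x).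
rewrite permKV in H2.
have E : (h^-1)%g x = x by apply: val_inj; apply/eqP; rewrite eqn_leq H1 H2.
by rewrite -{1}E permKV.
Qed.

Lemma inv_inj n (s t : 'S_n) : (forall a b, inv s a b = inv t a b) -> s = t.
Proof.
move=> Hst.
have Hinc : forall x y : 'I_n, x < y -> (s * t^-1)%g x < (s * t^-1)%g y.
  move=> x y xy; rewrite !permM.
  case: (ltngtP (s x) (s y)) => H.
  - move: (Hst (s x) (s y)); rewrite inv_pos H /= /inv H /= => E.
    have E' : ~~ ((t^-1)%g (s y) < (t^-1)%g (s x)) by rewrite -E -leqNgt ltnW.
    have ne : ((t^-1)%g (s x) : nat) != (t^-1)%g (s y).
      by rewrite val_eqE (inj_eq perm_inj); apply/eqP => /perm_inj ex; move: xy; rewrite ex ltnn.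
    lia.
  - have := Hst (s y) (s x); rewrite inv_pos H /= xy /inv H /=.
    lia.
  - by move/val_inj/perm_inj: H => E; move: xy; rewrite E; lia.
apply/permP => x; have := incr_id Hinc x; rewrite permM => E.
by rewrite -{2}E permKV.
Qed.

Lemma ord_neq n (x y : 'I_n) : x <> y -> (x : nat) <> y.
Proof. by move=> H E; apply: H; apply: val_inj. Qed.

Lemma cover_inv n (s s' : 'S_n) (i j : 'I_n) :
  (j : nat) = i.+1 -> s j < s i -> (forall x, s' x = s (tperm i j x)) ->
  forall a b, inv s' a b = inv s a b && ~~ ((a == s j) && (b == s i)).
Proof.
move=> Hj Hs Hs'.
have -> : s' = (tperm i j * s)%g by apply/permP => x; rewrite permM Hs'.
move=> a b.
have [u ->] : exists u, a = s u by exists ((s^-1)%g a); rewrite permKV.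
have [v ->] : exists v, b = s v by exists ((s^-1)%g b); rewrite permKV.
rewrite inv_pos /inv invgM tpermV !permM !permK !(inj_eq perm_inj).
have ij : (i == j) = false by apply/negbTE; rewrite -val_eqE /= Hj; lia.
have ji : (j == i) = false by apply/negbTE; rewrite -val_eqE /= Hj; lia.
case: (tpermP i j u) => [->|->|/ord_neq Hui /ord_neq Huj];
  case: (tpermP i j v) => [->|->|/ord_neq Hvi /ord_neq Hvj];
  rewrite ?eqxx ?ij ?ji /= ?andbT ?andbF // -?val_eqE /=; lia.
Qed.

Lemma cover_proper n (s s' : 'S_n) : weak_cover s s' -> invset s' \proper invset s.
Proof.
case=> i [j [Hj Hs Hs']].
have Hc := cover_inv Hj Hs Hs'.
apply/properP; split.
  by apply/subsetP => -[a b]; rewrite !inE /= Hc => /andP[].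
exists (s j, s i); rewrite !inE /= ?Hc inv_pos Hs /= ?eqxx /= ?andbF //.
by rewrite Hj.
Qed.

Lemma weak_le_sub n (t s : 'S_n) : weak_le t s -> invset t \subset invset s.
Proof.
rewrite /weak_le; elim=> [x y /cover_proper /properP []|x|x y z _ H1 _ H2] //.
exact: subset_trans H2 H1.
Qed.

Lemma find_desc n (s t : 'S_n) : (forall x y, inv t x y -> inv s x y) ->
  forall d (p q : 'I_n), q - p <= d -> p < q -> s q < s p -> ~~ inv t (s q) (s p) ->
  exists i j : 'I_n, [/\ (j : nat) = i.+1, s j < s i & ~~ inv t (s j) (s i)].
Proof.
move=> Hsub; elim=> [|d IH] p q Hd pq Hs Ht; first by lia.
case: (eqVneq (q : nat) p.+1) => Hq; first by exists p, q.
have rn : p.+1 < n by have := ltn_ord q; lia.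
pose r := Ordinal rn.
have Hsub' : forall x y, ~~ inv s x y -> ~~ inv t x y.
  by move=> x y; apply: contra; apply: Hsub.
set P := (t^-1)%g.
have Pinj : forall x y, x != y -> (P x : nat) != P y.
  by move=> x y xy; rewrite val_eqE (inj_eq perm_inj).
have sinj : forall x y : 'I_n, (x : nat) != y -> (s x : nat) != s y.
  by move=> x y xy; rewrite val_eqE (inj_eq perm_inj) -val_eqE.
have rp : (r : nat) = p.+1 by [].
have E1 : (r : nat) != p by rewrite rp; lia.
have E2 : (r : nat) != q by rewrite rp; lia.
have E3 : (q : nat) != p by lia.
have P1 := Pinj _ _ (sinj _ _ E1); have P2 := Pinj _ _ (sinj _ _ E2); have P3 := Pinj _ _ (sinj _ _ E3).
have S1 := sinj _ _ E1; have S2 := sinj _ _ E2; have S3 := sinj _ _ E3.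
case H1: ((s r < s p) && ~~ inv t (s r) (s p)).
  by move/andP: H1 => [h1 h2]; apply: (IH p r) => //; lia.
case H2: ((s q < s r) && ~~ inv t (s q) (s r)).
  by move/andP: H2 => [h1 h2]; apply: (IH r q) => //; lia.
have H3 : (s p < s r) -> ~~ inv t (s p) (s r).
  by move=> h; apply: Hsub'; rewrite inv_pos h /=; lia.
have H4 : (s r < s q) -> ~~ inv t (s r) (s q).
  by move=> h; apply: Hsub'; rewrite inv_pos h /=; lia.
move: Ht H1 H2 H3 H4; rewrite /inv -/P; lia.
Qed.

Lemma sub_weak_le n (t s : 'S_n) : invset t \subset invset s -> weak_le t s.
Proof.
have Heq : forall s, invset t \subset invset s -> invset s \subset invset t -> weak_le t s.
  move=> s0 H1 H2; have -> : s0 = t; last exact: rt_refl.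
  apply: inv_inj => a b; apply/idP/idP => H.
    by have := subsetP H2 (a, b); rewrite !inE; apply.
  by have := subsetP H1 (a, b); rewrite !inE; apply.
move: {2}#|invset s| (leqnn #|invset s|) => m; elim: m s => [|m IH] s Hm Hsub.
all: case: (boolP (invset s \subset invset t)) => Hst; first exact: Heq.
all: have [[x y] Hxs Hxt] := subsetPn Hst.
all: rewrite !inE /= in Hxs Hxt.
all: have Hsub2 : forall a b, inv t a b -> inv s a b by
       move=> a b H; have := subsetP Hsub (a, b); rewrite !inE; apply.
all: have Hxy : inv s (s ((s^-1)%g x)) (s ((s^-1)%g y)) by rewrite !permKV.
all: rewrite inv_pos in Hxy; move/andP: Hxy => [Hv Hpos].
all: have Ht0 : ~~ inv t (s ((s^-1)%g x)) (s ((s^-1)%g y)) by rewrite !permKV.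
all: have [i [j [Hj Hij Ht]]] := find_desc Hsub2 (leqnn _) Hpos Hv Ht0.
all: pose s' := (tperm i j * s)%g.
all: have Hc : weak_cover s s' by exists i, j; split => // z; rewrite permM.
all: have Hpr := proper_card (cover_proper Hc).
- lia.
- apply: (rt_trans _ _ _ s'); first exact: rt_step.
  apply: IH; first by lia.
  apply/subsetP => -[a b]; rewrite !inE /= => H.
  case: Hc => i' [j' [Hj' Hs' Hs'']].
  rewrite (cover_inv Hj Hij (fun z => permM _ _ z)) (Hsub2 _ _ H) /=.
  by apply/negP => /andP[/eqP Ea /eqP Eb]; move: Ht; rewrite -Ea -Eb H.
Qed.

Lemma weak_le_iff n (t s : 'S_n) : weak_le t s <-> invset t \subset invset s.
Proof. split; [exact: weak_le_sub | exact: sub_weak_le]. Qed.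

Lemma perm_of_rel n (R : 'I_n -> 'I_n -> bool) :
  (forall a b c : 'I_n, a < b -> b < c -> R a b -> R b c -> R a c) ->
  (forall a b c : 'I_n, a < b -> b < c -> ~~ R a b -> ~~ R b c -> ~~ R a c) ->
  exists s : 'S_n, forall a b, inv s a b = (a < b) && R a b.
Proof.
move=> HT HC.
pose lt (x y : 'I_n) := ((x < y) && ~~ R x y) || ((y < x) && R y x).
have tr : forall x y z : 'I_n, lt x y -> lt y z -> lt x z.
  move=> x y z; rewrite /lt.
  case: (ltngtP x y) => xy; case: (ltngtP y z) => yz; case: (ltngtP x z) => xz;
    rewrite /= ?orbF ?andbF ?andbT //; try lia.
  - exact: HC.
  - by move=> H1 H2; apply/negP => H3; move/negP: H1; apply; exact: HT H3 H2.
  - by move=> H1 H2; apply/negPn/negP => H3; move: H2; apply/negP; exact: HC H3 H1.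
  - by move/val_inj: xz => xz; subst; move=> /negP.
  - by move=> H1 H2; apply/negP => H3; move/negP: H2; apply; exact: HT H1 H3.
  - by move=> H1 H2; apply/negPn/negP => H3; move: H1; apply/negP; exact: HC H2 H3.
  - by move/val_inj: xz => xz; subst; move=> ->.
  - by move=> H1 H2; exact: HT H2 H1.
have irr : forall x, ~~ lt x x by move=> x; rewrite /lt ltnn.
have tot : forall x y, x != y -> lt x y || lt y x.
  move=> x y; rewrite -val_eqE /lt; case: (ltngtP x y) => //= _ _; case: (R _ _) => //.
pose rk x := #|[set y | lt y x]|.
have rk_lt : forall x, rk x < n.
  move=> x; rewrite -[n]card_ord -cardsT; apply: proper_card; apply/properP; split.
    exact: subsetT.
  by exists x; rewrite ?inE // (negbTE (irr x)).
have rk_mono : forall x y, lt x y -> rk x < rk y.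
  move=> x y xy; apply: proper_card; apply/properP; split.
    by apply/subsetP => w; rewrite !inE => /tr; apply.
  by exists x; rewrite !inE ?xy // (negbTE (irr x)).
pose f x := Ordinal (rk_lt x).
have finj : injective f.
  move=> x y /(congr1 val) /= E; apply/eqP/negPn/negP => /tot /orP[] /rk_mono; lia.
exists (perm finj)^-1%g => a b.
rewrite /inv invgK !permE /=.
case: (ltngtP a b) => //= ab.
case: (boolP (lt b a)) => H.
  by rewrite rk_mono //; move: H; rewrite /lt ab /= ltnNge (ltnW ab) /=.
have Hab : lt a b by move: (tot a b); rewrite -val_eqE (ltn_eqF ab) (negbTE H) orbF; apply.
have := rk_mono _ _ Hab; move: H; rewrite /lt ab /= ltnNge (ltnW ab) /= ?orbF => /negbTE ->; lia.
Qed.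

Lemma avoid_IC n (s : 'S_n) :
  avoids312 s <-> (forall a b c : 'I_n, a < b -> b < c -> inv s a c -> inv s a b).
Proof.
split.
  move=> Hav a b c ab bc Hac; apply/negPn/negP => Hnab; apply: Hav.
  exists ((s^-1)%g c), ((s^-1)%g a), ((s^-1)%g b); rewrite !permKV.
  have ne : ((s^-1)%g a : nat) != (s^-1)%g b.
    by rewrite val_eqE (inj_eq perm_inj) -val_eqE /=; lia.
  move: Hac Hnab; rewrite /inv => /andP[_ H1] H2; split; lia.
move=> HIC [i1 [i2 [i3 [h1 h2 h3 h4]]]].
have H : inv s (s i2) (s i1) by rewrite inv_pos; lia.
have := HIC _ _ _ h4 h3 H; rewrite inv_pos; lia.
Qed.

Lemma inv_T n (s : 'S_n) a b c : inv s a b -> inv s b c -> inv s a c.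
Proof. rewrite /inv; lia. Qed.

Lemma Ford_eq n (F G : Ford n) : sval F = sval G -> F = G.
Proof. case: F G => F HF [G HG] /= E; subst; congr exist; apply: eq_irrelevance. Qed.

Lemma Tam_eq n (F G : Tam n) : sval F = sval G -> F = G.
Proof. case: F G => F HF [G HG] /= E; subst; congr exist; apply: proof_irrelevance. Qed.

Lemma D_ord n F G : fs F = n -> fs G = n ->
  (forall a b : 'I_n, D F a b = D G a b) -> forall a b, D F a b = D G a b.
Proof.
move=> HF HG H a b.
case: (ltnP a n) => an; case: (ltnP b n) => bn.
- exact: (H (Ordinal an) (Ordinal bn)).
all: by apply/idP/idP => /D0; lia.
Qed.

Theorem theorem4p7 (n : nat) :
  exists f : Ford n -> Tam n,
    bijective f /\
    forall F1 F2 : Ford n,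
      forest_le (sval F1) (sval F2) <-> weak_le (sval (f F1)) (sval (f F2)).
Proof.
have exf : forall F : Ford n, {s : 'S_n | forall a b : 'I_n, inv s a b = D (sval F) a b}.
  move=> F; apply: constructive_indefinite_description.
  have [s Hs] := @perm_of_rel n (fun a b : 'I_n => D (sval F) a b)
    (fun a b c _ _ => @DT _ a b c)
    (fun a b c ab bc H1 H2 => introN idP (fun H3 => negP H1 (DIC ab bc H3))).
  exists s => a b; rewrite Hs; case E: (D _ a b); rewrite ?andbF // andbT.
  by have := D0 E; lia.
have avf : forall F, avoids312 (sval (exf F)).
  move=> F; apply/avoid_IC => a b c ab bc; rewrite !(svalP (exf F)); exact: DIC.
pose f F : Tam n := exist _ (sval (exf F)) (avf F).
have exg : forall T : Tam n, {F : Ford n | forall a b : 'I_n, D (sval F) a b = inv (sval T) a b}.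
  move=> T; apply: constructive_indefinite_description.
  pose R a b := [exists x : 'I_n, exists y : 'I_n,
                   [&& (x : nat) == a, (y : nat) == b & inv (sval T) x y]].
  have RE : forall x y : 'I_n, R x y = inv (sval T) x y.
    move=> x y; apply/idP/idP.
      by move=> /existsP[x' /existsP[y' /and3P[/eqP/val_inj-> /eqP/val_inj-> ->]]].
    by move=> H; apply/existsP; exists x; apply/existsP; exists y; rewrite !eqxx H.
  have Rsup : forall a b, R a b ->
      exists x y : 'I_n, [/\ (x : nat) = a, (y : nat) = b & inv (sval T) x y].
    by move=> a b /existsP[x /existsP[y /and3P[/eqP ? /eqP ? ?]]]; exists x, y.
  have HIC := proj1 (avoid_IC (sval T)) (svalP T).
  have [F [HF HD]] : exists F, fs F = n /\ forall a b, D F a b = R a b.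
    apply: build.
    - move=> a b /Rsup[x [y [<- <- /andP[H _]]]]; rewrite H /=; exact: ltn_ord.
    - move=> a b c /Rsup[x [y [<- <- H1]]] /Rsup[y' [z [Ey <- H2]]].
      move/val_inj: Ey => Ey; subst y'; rewrite RE; exact: inv_T H1 H2.
    - move=> a b c ab bc /Rsup[x [z [Ex Ez H]]]; subst a c.
      have bn : b < n by have := ltn_ord z; lia.
      have -> : b = Ordinal bn by [].
      rewrite RE; exact: (HIC _ _ z).
  by exists (exist _ F HF) => a b /=; rewrite HD RE.
pose g T := sval (exg T).
have fD : forall F (a b : 'I_n), inv (sval (f F)) a b = D (sval F) a b.
  by move=> F a b; rewrite /f /= (svalP (exf F)).
have gD : forall T (a b : 'I_n), D (sval (g T)) a b = inv (sval T) a b.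
  by move=> T a b; rewrite /g (svalP (exg T)).
exists f; split.
  exists g.
    move=> F; apply: Ford_eq; apply: Dinj; first by rewrite (svalP (g (f F))) (svalP F).
    apply: (D_ord (svalP (g (f F))) (svalP F)) => a b.
    by rewrite gD fD.
  move=> T; apply: Tam_eq; apply: inv_inj => a b.
  by rewrite fD gD.
move=> F1 F2; rewrite forest_le_D weak_le_iff.
split.
  move=> [_ H]; apply/subsetP => -[a b]; rewrite !inE /= !fD; exact: H.
move=> H; split; first by rewrite (svalP F1) (svalP F2).
move=> a b Hab; have /andP[_ bn] := D0 Hab; rewrite (svalP F1) in bn.
have an : a < n by have := D0 Hab; lia.
have := subsetP H (Ordinal an, Ordinal bn); rewrite !inE /= !fD; apply; exact: Hab.
Qed.
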